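(* Let $E$ be an imaginary quadratic field, $\iota_0\in\mathrm{Emb}(\mathfrak{o}_E,\mathcal{O})$, and define $B=\{g\in G: g^{-1}\cdot\iota_0\in\mathrm{Emb}(\mathfrak{o}_E,\mathcal{O})\}$, $B_p=\{g\in G_p: g^{-1}\cdot(\iota_0\otimes\mathrm{id}_{\mathbb{Q}_p})\in\mathrm{Emb}(\mathfrak{o}_{E,p},\mathcal{O}_p)\}$ and $B_\mathbb{A}=G_\infty\prod_p B_p\subset G_\mathbb{A}$. Then the map $B\ni g\mapsto g^{-1}\cdot\iota_0$ induces a bijection $T\backslash B/\Gamma\cong\mathrm{Emb}(\mathfrak{o}_E,\mathcal{O})/\!\sim$, and the diagonal embedding $B\to B_\mathbb{A}$ induces a bijection $T\backslash B/\Gamma\cong T\backslash B_\mathbb{A}/K$.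
   Context: $D$ is a definite quaternion algebra over $\mathbb{Q}$, $\mathcal{O}$ an Eichler order; $G=D^\times/\mathbb{Q}^\times$ (as algebraic group $\underline G(R)=(D\otimes R)^\times/R^\times$), $G_p$, $G_\mathbb{A}$ the local and adelic points. $K_p$ is the image of $\mathcal{O}_p^\times$ in $G_p$, $K_\infty=G_\infty$, $K=\prod_v K_v$; standing assumption: class number one, $G_\mathbb{A}=GK$. $\Gamma=G\cap K$ (image of $\mathcal{O}^\times$). $G$ acts on embeddings $E\hookrightarrow D$ by $(g\cdot\iota)(x)=g\iota(x)g^{-1}$ (similarly $G_p$ on embeddings $E\otimes\mathbb{Q}_p\to D\otimes\mathbb{Q}_p$). $\mathrm{Emb}(\mathfrak{o}_E,\mathcal{O})$ is the set of embeddings $\iota:E\hookrightarrow D$ with $\iota(E)\cap\mathcal{O}\cong\mathfrak{o}_E$; analogously $\mathrm{Emb}(\mathfrak{o}_{E,p},\mathcal{O}_p)$ locally, with $\mathfrak{o}_{E,p}=\mathfrak{o}_E\otimes\mathbb{Z}_p$. $\iota_1\sim\iota_2$ iff $\gamma\cdot\iota_1=\iota_2$ for some $\gamma\in\Gamma$. $T$ is the torus with $T(R)=(\iota_0(E)\otimes R)^\times/R^\times$, $T=T(\mathbb{Q})\subset G$. *)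

(* Defs.v *)
From HB Require Import structures.
From mathcomp Require Import all_boot all_order all_algebra.
From mathcomp Require Import reals.
Set Implicit Arguments. Unset Strict Implicit. Unset Printing Implicit Defensive.
Import Order.TTheory GRing.Theory Num.Theory.
Local Open Scope ring_scope.

(* Quaternion algebras (a,b)_F = F<1,i,j,k>, i^2=a, j^2=b, ij=-ji=k,   *)
Record quat (F : Type) := Quat { q0 : F; q1 : F; q2 : F; q3 : F }.

Definition qadd (F : fieldType) (x y : quat F) : quat F :=
  Quat (q0 x + q0 y) (q1 x + q1 y) (q2 x + q2 y) (q3 x + q3 y).
Definition qscale (F : fieldType) (c : F) (x : quat F) : quat F :=
  Quat (c * q0 x) (c * q1 x) (c * q2 x) (c * q3 x).
Definition qzero (F : fieldType) : quat F := Quat 0 0 0 0.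
Definition qone (F : fieldType) : quat F := Quat 1 0 0 0.
Definition qmap (F K : fieldType) (f : F -> K) (x : quat F) : quat K :=
  Quat (f (q0 x)) (f (q1 x)) (f (q2 x)) (f (q3 x)).

Definition qmul (F : fieldType) (a b : rat) (x y : quat F) : quat F :=
  let A := ratr a : F in let B := ratr b : F in
  Quat (q0 x * q0 y + A * q1 x * q1 y + B * q2 x * q2 y - A * B * q3 x * q3 y)
       (q0 x * q1 y + q1 x * q0 y - B * q2 x * q3 y + B * q3 x * q2 y)
       (q0 x * q2 y + q2 x * q0 y + A * q1 x * q3 y - A * q3 x * q1 y)
       (q0 x * q3 y + q3 x * q0 y + q1 x * q2 y - q2 x * q1 y).

Definition qconj (F : fieldType) (x : quat F) : quat F :=
  Quat (q0 x) (- q1 x) (- q2 x) (- q3 x).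
Definition qnrd (F : fieldType) (a b : rat) (x : quat F) : F :=
  let A := ratr a : F in let B := ratr b : F in
  q0 x ^+ 2 - A * q1 x ^+ 2 - B * q2 x ^+ 2 + A * B * q3 x ^+ 2.
Definition qinv (F : fieldType) (a b : rat) (x : quat F) : quat F :=
  qscale (qnrd a b x)^-1 (qconj x).

(* G(F) = (D (x) F)^x / F^x : elements are represented by nonzero
   quaternions; two representatives give the same element of G(F) iff
   they differ by a nonzero scalar. *)
Definition projeq (F : fieldType) (x y : quat F) : Prop :=
  exists c : F, c != 0 /\ y = qscale c x.

Definition i0 : 'I_4 := @Ordinal 4 0 isT.
Definition i1 : 'I_4 := @Ordinal 4 1 isT.
Definition i2 : 'I_4 := @Ordinal 4 2 isT.
Definition i3 : 'I_4 := @Ordinal 4 3 isT.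

Definition qlin (F : fieldType) (c : 'I_4 -> F) (e : 'I_4 -> quat F) : quat F :=
  qadd (qadd (qscale (c i0) (e i0)) (qscale (c i1) (e i1)))
       (qadd (qscale (c i2) (e i2)) (qscale (c i3) (e i3))).

Definition lat (F : fieldType) (S : F -> Prop) (e : 'I_4 -> quat F) (x : quat F) : Prop :=
  exists c : 'I_4 -> F, (forall i, S (c i)) /\ x = qlin c e.

Definition isZ (q : rat) : Prop := exists z : int, q = z%:~R.

Definition qbasis (e : 'I_4 -> quat rat) : Prop :=
  forall c : 'I_4 -> rat, qlin c e = qzero rat -> forall i, c i = 0.

Definition is_order (a b : rat) (P : quat rat -> Prop) : Prop :=
  (exists e, qbasis e /\ forall x, P x <-> lat isZ e x) /\
  P (qone rat) /\ (forall x y, P x -> P y -> P (qmul a b x y)).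

Definition is_maximal_order (a b : rat) (P : quat rat -> Prop) : Prop :=
  is_order a b P /\
  forall P', is_order a b P' -> (forall x, P x -> P' x) -> forall x, P' x -> P x.

Definition is_eichler (a b : rat) (e : 'I_4 -> quat rat) : Prop :=
  qbasis e /\
  exists O1 O2, is_maximal_order a b O1 /\ is_maximal_order a b O2 /\
     forall x, lat isZ e x <-> (O1 x /\ O2 x).

(* Axiomatic characterisation of (Q_p, |.|_p): a complete field with a *)
(* nonarchimedean absolute value restricting to the p-adic absolute    *)
(* value on Q, in which Q is dense.  This determines Q_p up to unique  *)
(* isometric isomorphism.                                              *)
Definition padic_abs_rat (R : realType) (p : nat) (q : rat) : R :=
  (p%:R : R) ^ ((logn p (absz (denq q)))%:Z - (logn p (absz (numq q)))%:Z).

Definition is_Qp (R : realType) (p : nat) (F : fieldType) (abs : F -> R) : Prop :=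
  (forall x, 0 <= abs x) /\
      (forall x, abs x = 0 <-> x = 0) /\
      (forall x y, abs (x * y) = abs x * abs y) /\
      (forall x y, abs (x + y) <= Num.max (abs x) (abs y)) /\
      (forall q : rat, q != 0 -> abs (ratr q) = padic_abs_rat R p q) /\
      (forall (x : F) (eps : R), 0 < eps -> exists q : rat, abs (x - ratr q) < eps) /\
      (forall u : nat -> F,
          (forall eps : R, 0 < eps -> exists N, forall m n, (N <= m)%N -> (N <= n)%N ->
                abs (u m - u n) < eps) ->
          exists l, forall eps : R, 0 < eps -> exists N, forall n, (N <= n)%N ->
                abs (u n - l) < eps).

(* The imaginary quadratic field E = Q(sqrt d) (d < 0 squarefree),     *)
(* E (x) F = F + F sqrt d, represented as pairs (u,v) = u + v sqrt d.  *)
Definition imag_quad_disc (d : int) : Prop :=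
  d < 0 /\ forall m : nat, (m * m %| absz d)%N -> m = 1%N.

Definition eadd (F : fieldType) (x y : F * F) : F * F := (x.1 + y.1, x.2 + y.2).
Definition escale (F : fieldType) (c : F) (x : F * F) : F * F := (c * x.1, c * x.2).
Definition emul (F : fieldType) (d : int) (x y : F * F) : F * F :=
  (x.1 * y.1 + d%:~R * x.2 * y.2, x.1 * y.2 + x.2 * y.1).

(* omega: Z-basis element of o_E = Z + Z omega *)
Definition omega (F : fieldType) (d : int) : F * F :=
  if (d %% 4)%Z == 1 then (ratr (1 / 2%:R), ratr (1 / 2%:R)) else (0, 1).

Definition oE (F : fieldType) (d : int) (S : F -> Prop) (x : F * F) : Prop :=
  exists m n : F, S m /\ S n /\ x = eadd (m, 0) (escale n (omega F d)).

Definition is_emb (F : fieldType) (a b : rat) (d : int) (iota : F * F -> quat F) : Prop :=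
  (forall x y, iota (eadd x y) = qadd (iota x) (iota y)) /\
  (forall c x, iota (escale c x) = qscale c (iota x)) /\
  (forall x y, iota (emul d x y) = qmul a b (iota x) (iota y)) /\
  iota (1, 0) = qone F /\
  injective iota.

Definition opt_emb (F : fieldType) (a b : rat) (d : int) (S : F -> Prop)
    (e : 'I_4 -> quat F) (iota : F * F -> quat F) : Prop :=
  is_emb a b d iota /\ forall x, lat S e (iota x) <-> oE d S x.

Definition gact (F : fieldType) (a b : rat) (g : quat F) (iota : F * F -> quat F)
  : F * F -> quat F :=
  fun x => qmul a b (qmul a b g (iota x)) (qinv a b g).

Definition emb_ext (F : fieldType) (iota0 : rat * rat -> quat rat) : F * F -> quat F :=
  fun x => qadd (qscale x.1 (qone F)) (qscale x.2 (qmap ratr (iota0 (0, 1)))).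

(* image in G(F) of the units of the lattice-order spanned by e over S:
   g represents such an element iff some scalar multiple c g is a unit *)
Definition inK (F : fieldType) (a b : rat) (S : F -> Prop) (e : 'I_4 -> quat F)
    (g : quat F) : Prop :=
  exists c : F, c != 0 /\ qscale c g <> qzero F /\
    lat S e (qscale c g) /\ lat S e (qinv a b (qscale c g)).

Definition Zp_int (R : realType) (F : fieldType) (abs : F -> R) : F -> Prop :=
  fun x => abs x <= 1.

(* adelic points: infinite component and p-components (for p prime) *)
Definition adele (R : realType) (Qp : nat -> fieldType) : Type :=
  (quat R * (forall p : nat, quat (Qp p)))%type.

Definition diag (R : realType) (Qp : nat -> fieldType) (g : quat rat) : adele R Qp :=
  (qmap ratr g, fun p => qmap ratr g).

(* Main.v *)
Require Import Defs.
From HB Require Import structures.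
From mathcomp Require Import all_boot all_order all_algebra.
From mathcomp Require Import reals.
From mathcomp Require Import ring lra zify.
From Stdlib Require Import FunctionalExtensionality.
Import Order.TTheory GRing.Theory Num.Theory.
Set Implicit Arguments. Unset Strict Implicit. Unset Printing Implicit Defensive.
Local Open Scope ring_scope.
Section Quat.
Variables (F : fieldType) (a b : rat).
Local Notation mul := (qmul a b).
Local Notation inv := (qinv a b).
Local Notation nrd := (qnrd a b).
Local Notation Q := (quat F).
Local Notation one := (qone F).

Ltac qdes := repeat match goal with x : quat F |- _ => destruct x end.
Lemma quat_ext (x y : Q) : q0 x = q0 y -> q1 x = q1 y -> q2 x = q2 y -> q3 x = q3 y -> x = y.
Proof. by case: x; case: y => /= ? ? ? ? ? ? ? ? -> -> -> ->. Qed.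
Ltac qring := qdes; apply: quat_ext; rewrite /qmul /qadd /qscale /qconj /qnrd /qone /qzero /=; ring.

Lemma quat_eta (x : Q) : x = Quat (q0 x) (q1 x) (q2 x) (q3 x).
Proof. by case: x. Qed.

Lemma qmulA (x y z : Q) : mul (mul x y) z = mul x (mul y z).
Proof. qring. Qed.
Lemma mul1q (x : Q) : mul one x = x.
Proof. qring. Qed.
Lemma mulq1 (x : Q) : mul x one = x.
Proof. qring. Qed.
Lemma mulDl (x y z : Q) : mul (qadd x y) z = qadd (mul x z) (mul y z).
Proof. qring. Qed.
Lemma mulDr (x y z : Q) : mul z (qadd x y) = qadd (mul z x) (mul z y).
Proof. qring. Qed.
Lemma mulZl c (x y : Q) : mul (qscale c x) y = qscale c (mul x y).
Proof. qring. Qed.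
Lemma mulZr c (x y : Q) : mul x (qscale c y) = qscale c (mul x y).
Proof. qring. Qed.
Lemma scaleA c c' (x : Q) : qscale c (qscale c' x) = qscale (c * c') x.
Proof. qring. Qed.
Lemma scale1 (x : Q) : qscale 1 x = x.
Proof. qring. Qed.
Lemma scale0 (x : Q) : qscale 0 x = qzero F.
Proof. qring. Qed.
Lemma scaleq0 c : qscale c (qzero F) = qzero F.
Proof. apply: quat_ext; rewrite /qscale /qzero /=; ring. Qed.
Lemma scale_one c (x : Q) : mul (qscale c one) x = qscale c x.
Proof. by rewrite mulZl mul1q. Qed.
Lemma mul_conj (x : Q) : mul x (qconj x) = qscale (nrd x) one.
Proof. qring. Qed.
Lemma conj_mul (x : Q) : mul (qconj x) x = qscale (nrd x) one.
Proof. qring. Qed.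
Lemma nrdM (x y : Q) : nrd (mul x y) = nrd x * nrd y.
Proof. qdes; rewrite /qmul /qnrd /=; ring. Qed.
Lemma conjM (x y : Q) : qconj (mul x y) = mul (qconj y) (qconj x).
Proof. qring. Qed.
Lemma nrdZ c (x : Q) : nrd (qscale c x) = c ^+ 2 * nrd x.
Proof. qdes; rewrite /qscale /qnrd /=; ring. Qed.
Lemma conjZ c (x : Q) : qconj (qscale c x) = qscale c (qconj x).
Proof. qring. Qed.
Lemma nrd_conj (x : Q) : nrd (qconj x) = nrd x.
Proof. qdes; rewrite /qconj /qnrd /=; ring. Qed.
Lemma conjK (x : Q) : qconj (qconj x) = x.
Proof. qring. Qed.
Lemma nrd1 : nrd one = 1.
Proof. rewrite /qnrd /qone /=; ring. Qed.

Lemma mulV (x : Q) : nrd x != 0 -> mul x (inv x) = one.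
Proof. by move=> h; rewrite /qinv mulZr mul_conj scaleA mulVf // scale1. Qed.
Lemma mulVq (x : Q) : nrd x != 0 -> mul (inv x) x = one.
Proof. by move=> h; rewrite /qinv mulZl conj_mul scaleA mulVf // scale1. Qed.
Lemma invM (x y : Q) : inv (mul x y) = mul (inv y) (inv x).
Proof. by rewrite /qinv mulZl mulZr scaleA conjM nrdM invfM mulrC. Qed.
Lemma invZ c (x : Q) : inv (qscale c x) = qscale c^-1 (inv x).
Proof.
rewrite /qinv nrdZ conjZ !scaleA; congr qscale.
have [->|hc] := eqVneq c 0; first by rewrite invr0 !mul0r mulr0.
have [->|hn] := eqVneq (nrd x) 0; first by rewrite mulr0 invr0 mul0r mulr0.
by field; rewrite hn hc.
Qed.
Lemma nrd_inv (x : Q) : nrd (inv x) = (nrd x)^-1.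
Proof.
rewrite /qinv nrdZ nrd_conj.
have [->|h] := eqVneq (nrd x) 0; first by rewrite invr0 mulr0.
by rewrite expr2 -mulrA mulVf // mulr1.
Qed.
Lemma invK (x : Q) : nrd x != 0 -> inv (inv x) = x.
Proof.
move=> h; have -> : inv x = qscale (nrd x)^-1 (qconj x) by [].
rewrite invZ /qinv conjK nrd_conj invrK scaleA mulfV // scale1 //.
Qed.
Lemma inv1 : inv one = one.
Proof. by rewrite /qinv nrd1 invr1 scale1 /qconj /qone /= oppr0. Qed.
Lemma nrd_inv_neq0 (x : Q) : nrd x != 0 -> nrd (inv x) != 0.
Proof. by move=> h; rewrite nrd_inv invr_eq0. Qed.
Lemma nrdM_neq0 (x y : Q) : nrd x != 0 -> nrd y != 0 -> nrd (mul x y) != 0.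
Proof. by move=> hx hy; rewrite nrdM mulf_neq0. Qed.
Lemma nrd0 : nrd (qzero F) = 0.
Proof. rewrite /qnrd /qzero /=; ring. Qed.
Lemma nrd_neq0_nz (x : Q) : nrd x != 0 -> x <> qzero F.
Proof. by move=> h hx; move: h; rewrite hx nrd0 eqxx. Qed.
Lemma scaleK c (x : Q) : c != 0 -> qscale c^-1 (qscale c x) = x.
Proof. by move=> h; rewrite scaleA mulVf // scale1. Qed.
Lemma scale_nz c (x : Q) : c != 0 -> x <> qzero F -> qscale c x <> qzero F.
Proof. by move=> h hx hcx; apply: hx; rewrite -(scaleK x h) hcx scaleq0. Qed.
Lemma inv_scale_one c : c != 0 -> inv (qscale c one) = qscale c^-1 one.
Proof. by move=> h; rewrite invZ inv1. Qed.

Lemma gactZ c g (i : F * F -> Q) x : c != 0 -> gact a b (qscale c g) i x = gact a b g i x.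
Proof. by move=> h; rewrite /gact invZ mulZl mulZl mulZr scaleA mulfV // scale1. Qed.
Lemma gactM g h (i : F * F -> Q) x : gact a b (mul g h) i x = gact a b g (gact a b h i) x.
Proof. by rewrite /gact invM !qmulA. Qed.
Lemma gact1 (i : F * F -> Q) x : gact a b one i x = i x.
Proof. by rewrite /gact inv1 mul1q mulq1. Qed.
Lemma gact_inv g (i : F * F -> Q) x : nrd g != 0 -> gact a b (inv g) (gact a b g i) x = i x.
Proof. by move=> h; rewrite -gactM mulVq // gact1. Qed.
Lemma gact_invr g (i : F * F -> Q) x : nrd g != 0 -> gact a b g (gact a b (inv g) i) x = i x.
Proof. by move=> h; rewrite -gactM mulV // gact1. Qed.

Lemma is_emb_gact d g (i : F * F -> Q) : nrd g != 0 -> is_emb a b d i -> is_emb a b d (gact a b g i).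
Proof.
move=> hg [hA [hS [hM [h1 hI]]]]; split; [|split; [|split; [|split]]].
- by move=> x y; rewrite /gact hA mulDr mulDl.
- by move=> c x; rewrite /gact hS mulZr mulZl.
- move=> x y; rewrite /gact hM.
  by rewrite !qmulA -(qmulA (inv g) g) mulVq // mul1q.
- by rewrite /gact h1 mulq1 mulV.
- move=> x y hxy; apply: hI.
  rewrite -(gact_inv i x hg) -(gact_inv i y hg).
  by rewrite /gact in hxy *; rewrite hxy.
Qed.
End Quat.
Lemma ratrQ (x : rat) : ratr x = x.
Proof. by rewrite /ratr divq_num_den. Qed.

Section CharZero.
Variable F : fieldType.
Hypothesis hc : forall n : nat, (n.+1)%:R != 0 :> F.

Lemma nz_denF (x : rat) : (denq x)%:~R != 0 :> F.
Proof.
have := denq_gt0 x; case: (denq x) => [[|n]|n] //= _.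
by move: (hc n).
Qed.

Fact ratrF_zmod : zmod_morphism (@ratr F).
Proof.
have injZtoQ: @injective rat int intr by apply: intr_inj.
have nz_den := nz_denF.
move=> x y.
apply: (canLR (mulfK (nz_den _))); apply: (mulIf (nz_den x)).
rewrite mulrAC mulrBl divfK ?nz_den // mulrAC -!rmorphM.
apply: (mulIf (nz_den y)); rewrite mulrAC mulrBl divfK ?nz_den //.
rewrite -!(rmorphM, rmorphB); congr _%:~R; apply: injZtoQ.
rewrite !(rmorphM, rmorphB) /= [_ - _]lock /= -lock !numqE.
by rewrite (mulrAC y) -!mulrBl -mulrA mulrAC !mulrA.
Qed.

Fact ratrF_monoid : monoid_morphism (@ratr F).
Proof.
have injZtoQ: @injective rat int intr by apply: intr_inj.
have nz_den := nz_denF.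
split=> [|x y]; first by rewrite /ratr divr1.
rewrite /ratr mulrC mulrAC; apply: canLR (mulKf (nz_den _)) _; rewrite !mulrA.
do 2!apply: canRL (mulfK (nz_den _)) _; rewrite -!rmorphM; congr _%:~R.
apply: injZtoQ; rewrite !rmorphM [x * y]lock /= !numqE -lock.
by rewrite -!mulrA mulrA mulrCA -!mulrA (mulrCA y).
Qed.

Definition ratrF : {rmorphism rat -> F} :=
  HB.pack (@ratr F) (GRing.isZmodMorphism.Build _ _ _ ratrF_zmod)
                    (GRing.isMonoidMorphism.Build _ _ _ ratrF_monoid).
Lemma ratrFE x : ratr x = ratrF x.
Proof. by []. Qed.
End CharZero.

Section QMap.
Variables (F : fieldType) (f : {rmorphism rat -> F}) (a b : rat).
Hypothesis hf : forall x, ratr x = f x.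
Local Notation mul := (qmul a b).
Local Notation inv := (qinv a b).
Local Notation nrd := (qnrd a b).
Local Notation qm := (@qmap rat F ratr).

Ltac qdes := repeat match goal with x : quat _ |- _ => destruct x end.
Ltac mring := qdes; apply: quat_ext;
  rewrite /qmap /qmul /qadd /qscale /qconj /qnrd /qone /qzero /= ?ratrQ ?hf ?rmorph0 ?rmorph1
    ?(rmorphD, rmorphB, rmorphM, rmorphN, rmorph0, rmorph1) ?hf //; ring.

Lemma qmap_mul (x y : quat rat) : qm (mul x y) = mul (qm x) (qm y).
Proof. mring. Qed.
Lemma qmap_add (x y : quat rat) : qm (qadd x y) = qadd (qm x) (qm y).
Proof. mring. Qed.
Lemma qmap_scale c (x : quat rat) : qm (qscale c x) = qscale (ratr c) (qm x).
Proof. mring. Qed.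
Lemma qmap_conj (x : quat rat) : qm (qconj x) = qconj (qm x).
Proof. mring. Qed.
Lemma qmap_nrd (x : quat rat) : ratr (nrd x) = nrd (qm x).
Proof. qdes; rewrite /qmap /qnrd /= ?ratrQ !hf !(rmorphD, rmorphB, rmorphM, rmorphN, rmorphXn) //. Qed.
Lemma qmap_one : qm (qone rat) = qone F.
Proof. by apply: quat_ext; rewrite /= hf ?rmorph0 ?rmorph1. Qed.
Lemma qmap_zero : qm (qzero rat) = qzero F.
Proof. by apply: quat_ext; rewrite /= hf ?rmorph0 ?rmorph1. Qed.
Lemma qmap_inv (x : quat rat) : qm (inv x) = inv (qm x).
Proof. by rewrite /qinv qmap_scale qmap_conj hf fmorphV -hf qmap_nrd. Qed.
Lemma qmap_inj (x y : quat rat) : qm x = qm y -> x = y.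
Proof.
case: x; case: y => ? ? ? ? ? ? ? ? [] /=; rewrite !hf.
by move=> /fmorph_inj -> /fmorph_inj -> /fmorph_inj -> /fmorph_inj ->.
Qed.
Lemma qmap_nz (x : quat rat) : x <> qzero rat -> qm x <> qzero F.
Proof. by move=> h h'; apply: h; apply: qmap_inj; rewrite h' qmap_zero. Qed.
Lemma qmap_nrd_neq0 (x : quat rat) : nrd x != 0 -> nrd (qm x) != 0.
Proof. by rewrite -qmap_nrd hf fmorph_eq0. Qed.
Lemma ratr_inj (x y : rat) : ratr x = ratr y :> F -> x = y.
Proof. by rewrite !hf => /fmorph_inj. Qed.
Lemma ratr_neq0 (x : rat) : x != 0 -> ratr x != 0 :> F.
Proof. by rewrite hf fmorph_eq0. Qed.
End QMap.
Definition vq (F : fieldType) (x : quat F) (k : 'I_4) : F :=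
  match nat_of_ord k with 0 => q0 x | 1 => q1 x | 2 => q2 x | _ => q3 x end%N.

Lemma sum4 (V : nmodType) (g : 'I_4 -> V) : \sum_i g i = g i0 + g i1 + g i2 + g i3.
Proof.
rewrite !big_ord_recr big_ord0 /= add0r.
by congr (_ + _ + _ + _); apply: congr1; apply: val_inj.
Qed.

Lemma ord4_cases (P : 'I_4 -> Prop) : P i0 -> P i1 -> P i2 -> P i3 -> forall k, P k.
Proof.
move=> h0 h1 h2 h3 [[|[|[|[|k]]]] hk] //.
- by rewrite (_ : Ordinal hk = i0) //; apply: val_inj.
- by rewrite (_ : Ordinal hk = i1) //; apply: val_inj.
- by rewrite (_ : Ordinal hk = i2) //; apply: val_inj.
- by rewrite (_ : Ordinal hk = i3) //; apply: val_inj.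
Qed.

Section VQ.
Variable F : fieldType.
Lemma vq_ext (x y : quat F) : (forall k, vq x k = vq y k) -> x = y.
Proof. by move=> h; apply: quat_ext; [apply: (h i0)|apply: (h i1)|apply: (h i2)|apply: (h i3)]. Qed.
Lemma vq_qlin (c : 'I_4 -> F) e k : vq (qlin c e) k = \sum_i c i * vq (e i) k.
Proof. by rewrite sum4; elim/ord4_cases: k; rewrite /vq /qlin /= addrA. Qed.
Lemma vq_add (x y : quat F) k : vq (qadd x y) k = vq x k + vq y k.
Proof. by elim/ord4_cases: k. Qed.
Lemma vq_scale c (x : quat F) k : vq (qscale c x) k = c * vq x k.
Proof. by elim/ord4_cases: k. Qed.
Lemma vq_map (f : rat -> F) (x : quat rat) k : vq (qmap f x) k = f (vq x k).
Proof. by elim/ord4_cases: k. Qed.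
End VQ.

Lemma qmap_ratrQ (x : quat rat) : qmap ratr x = x.
Proof. by case: x => *; rewrite /qmap /= !ratrQ. Qed.

Lemma basis_inv (e : 'I_4 -> quat rat) : qbasis e -> exists N : 'I_4 -> 'I_4 -> rat,
  (forall k j, \sum_i N k i * vq (e i) j = (k == j)%:R) /\
  (forall i j, \sum_k vq (e i) k * N k j = (i == j)%:R).
Proof.
move=> hb; pose M := \matrix_(i < 4, k < 4) vq (e i) k.
have hM : M \in unitmx.
  rewrite -row_free_unit -kermx_eq0; apply/eqP/row_matrixP => i; rewrite row0.
  set r := row i (kermx M).
  have hr : r *m M = 0 by rewrite /r -row_mul mulmx_ker row0.
  apply/rowP => j; rewrite mxE.
  suff /hb h : qlin (fun l => r 0 l) e = qzero rat.
    by have := h j; rewrite /r mxE => ->; rewrite mxE.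

  apply: vq_ext => k; rewrite vq_qlin.
  rewrite (_ : vq (qzero rat) k = 0); last by elim/ord4_cases: k.
  have := congr1 (fun A : 'M[rat]_(1,4) => A 0 k) hr; rewrite !mxE => hk.
  by rewrite -[RHS]hk; apply: eq_bigr => l _; rewrite /M !mxE.
exists (fun k j => invmx M k j); split => k j.
- have := congr1 (fun A : 'M[rat]_4 => A k j) (mulVmx hM); rewrite !mxE => hk.
  by rewrite -[RHS]hk; apply: eq_bigr => l _; rewrite /M !mxE.
- have := congr1 (fun A : 'M[rat]_4 => A k j) (mulmxV hM); rewrite !mxE => hk.
  by rewrite -[RHS]hk; apply: eq_bigr => l _; rewrite /M !mxE.
Qed.

Section Crd.
Variables (e : 'I_4 -> quat rat) (N : 'I_4 -> 'I_4 -> rat).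
Hypothesis hNM : forall k j, \sum_i N k i * vq (e i) j = (k == j)%:R.
Hypothesis hMN : forall i j, \sum_k vq (e i) k * N k j = (i == j)%:R.

Definition crd (F : fieldType) (x : quat F) (j : 'I_4) : F := \sum_k vq x k * ratr (N k j).

Variables (F : fieldType) (f : {rmorphism rat -> F}).
Hypothesis hf : forall x, ratr x = f x.
Local Notation eF := (fun i => @qmap rat F ratr (e i)).

Lemma sum_delta (c : 'I_4 -> F) j : \sum_i c i * (i == j)%:R = c j.
Proof.
rewrite (bigD1 j) //= eqxx mulr1 big1 ?addr0 // => i /negPf ->; by rewrite mulr0.
Qed.
Lemma sum_delta' (c : 'I_4 -> F) j : \sum_i c i * (j == i)%:R = c j.
Proof. by rewrite -(sum_delta c j); apply: eq_bigr => i _; rewrite eq_sym. Qed.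

Lemma crd_qlin (c : 'I_4 -> F) j : crd (qlin c eF) j = c j.
Proof.
rewrite /crd.
under eq_bigr => k _ do rewrite vq_qlin big_distrl /=.
rewrite exchange_big /= -[RHS](sum_delta c j).
apply: eq_bigr => i _.
rewrite -(rmorph_nat f) -(hMN i j) rmorph_sum big_distrr /=; apply: eq_bigr => k _.
by rewrite vq_map !hf rmorphM mulrA.
Qed.

Lemma qlin_crd (x : quat F) : qlin (crd x) eF = x.
Proof.
apply: vq_ext => k; rewrite vq_qlin /crd.
under eq_bigr => i _ do rewrite big_distrl /=.
rewrite exchange_big /= -[RHS](sum_delta' (vq x) k).
apply: eq_bigr => l _.
rewrite eq_sym -(rmorph_nat f) -(hNM l k) rmorph_sum big_distrr /=; apply: eq_bigr => i _.
by rewrite vq_map !hf rmorphM mulrA.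
Qed.

Lemma lat_crd (S : F -> Prop) (x : quat F) : lat S eF x <-> forall i, S (crd x i).
Proof.
split.
- by move=> [c [hc ->]] i; rewrite crd_qlin.
- by move=> h; exists (crd x); split => //; rewrite qlin_crd.
Qed.

Lemma crd_add (x y : quat F) j : crd (qadd x y) j = crd x j + crd y j.
Proof. by rewrite /crd -big_split /=; apply: eq_bigr => k _; rewrite vq_add mulrDl. Qed.
Lemma crd_scale c (x : quat F) j : crd (qscale c x) j = c * crd x j.
Proof. by rewrite /crd big_distrr /=; apply: eq_bigr => k _; rewrite vq_scale mulrA. Qed.
Lemma crd_map (x : quat rat) j : crd (qmap ratr x) j = ratr (crd x j) :> F.
Proof.
rewrite /crd hf rmorph_sum /=; apply: eq_bigr => k _.
by rewrite vq_map rmorphM /= !hf ratrQ.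
Qed.
End Crd.
Lemma isZP (q : rat) : isZ q <-> denq q = 1.
Proof. by split => [/ratArchimedean.intrP/eqP|/eqP/ratArchimedean.intrP]. Qed.

Lemma isZ_int (z : int) : isZ z%:~R.
Proof. by exists z. Qed.
Lemma isZD x y : isZ x -> isZ y -> isZ (x + y).
Proof. by move=> [u ->] [v ->]; exists (u + v); rewrite rmorphD. Qed.
Lemma isZM x y : isZ x -> isZ y -> isZ (x * y).
Proof. by move=> [u ->] [v ->]; exists (u * v); rewrite rmorphM. Qed.
Lemma isZN x : isZ x -> isZ (- x).
Proof. by move=> [u ->]; exists (- u); rewrite rmorphN. Qed.
Lemma isZ0 : isZ 0. Proof. by exists 0. Qed.
Lemma isZ1 : isZ 1. Proof. by exists 1. Qed.

Lemma isZ_den (q : rat) : denq q != 1 -> exists p, prime p /\ (p %| `|denq q|)%N.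
Proof.
move=> h; exists (pdiv `|denq q|); split; last exact: pdiv_dvd.
apply: pdiv_prime; have := denq_gt0 q; case: (denq q) h => [[|[|n]]|n] //.
Qed.

Section Padic.
Variables (R : realType) (p : nat) (F : fieldType) (abs : F -> R).
Hypothesis hp : prime p.
Hypothesis H : is_Qp p abs.
Local Notation Zp := (Zp_int abs).

Lemma abs_ge0 x : 0 <= abs x. Proof. by case: H => h _; apply: h. Qed.
Lemma abs_eq0 x : abs x = 0 <-> x = 0. Proof. by case: H => _ [h _]; apply: h. Qed.
Lemma absM x y : abs (x * y) = abs x * abs y. Proof. by case: H => _ [_ [h _]]; apply: h. Qed.
Lemma abs_ultra x y : abs (x + y) <= Num.max (abs x) (abs y). Proof. by case: H => _ [_ [_ [h _]]]; apply: h. Qed.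
Lemma abs_rat q : q != 0 -> abs (ratr q) = padic_abs_rat R p q. Proof. by case: H => _ [_ [_ [_ [h _]]]]; apply: h. Qed.
Lemma abs_dense x eps : 0 < eps -> exists q : rat, abs (x - ratr q) < eps.
Proof. by case: H => _ [_ [_ [_ [_ [h _]]]]]; apply: h. Qed.

Lemma abs0 : abs 0 = 0. Proof. by apply/abs_eq0. Qed.
Lemma abs1 : abs 1 = 1.
Proof.
have h : abs 1 * abs 1 = abs 1 * 1 by rewrite -absM !mulr1.
have nz : abs 1 != 0 by apply/eqP => /abs_eq0/eqP; rewrite oner_eq0.
exact: (mulfI nz h).
Qed.
Lemma absN1 : abs (-1) = 1.
Proof.
have h : abs (-1) * abs (-1) = 1 by rewrite -absM mulrNN mulr1 abs1.
have h0 := abs_ge0 (-1).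
have : (abs (-1) - 1) * (abs (-1) + 1) = 0 by rewrite mulrDr !mulrBl h; ring.
move/eqP; rewrite mulf_eq0 => /orP [|]; first by rewrite subr_eq0 => /eqP.
by move=> /eqP h1; exfalso; move: h0; rewrite -[abs _](addrK 1) h1; rewrite sub0r oppr_ge0 ler10.
Qed.
Lemma absN x : abs (- x) = abs x.
Proof. by rewrite -mulN1r absM absN1 mul1r. Qed.

Lemma ZpD x y : Zp x -> Zp y -> Zp (x + y).
Proof. by rewrite /Zp_int => hx hy; apply: le_trans (abs_ultra x y) _; rewrite ge_max hx hy. Qed.
Lemma ZpM x y : Zp x -> Zp y -> Zp (x * y).
Proof.
rewrite /Zp_int absM => hx hy.
by rewrite -[1](mulr1 1); apply: ler_pM => //; apply: abs_ge0.
Qed.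
Lemma ZpN x : Zp x -> Zp (- x). Proof. by rewrite /Zp_int absN. Qed.
Lemma ZpB x y : Zp x -> Zp y -> Zp (x - y). Proof. by move=> hx hy; apply: ZpD => //; apply: ZpN. Qed.
Lemma Zp0 : Zp 0. Proof. by rewrite /Zp_int abs0. Qed.
Lemma Zp1 : Zp 1. Proof. by rewrite /Zp_int abs1. Qed.

Lemma p_gt1 : 1 < (p%:R : R).
Proof. by rewrite ltr1n prime_gt1. Qed.

Lemma padic_pos q : 0 < padic_abs_rat R p q.
Proof. by apply: exprz_gt0; apply: lt_trans p_gt1. Qed.

Lemma charF n : (n.+1)%:R != 0 :> F.
Proof.
apply/eqP => h.
have : abs (ratr (n.+1%:R : rat)) = 0 by rewrite ratr_nat h abs0.
rewrite abs_rat ?pnatr_eq0 // => h'.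
by move: (padic_pos (n.+1)%:R); rewrite h' ltxx.
Qed.

Definition fp := ratrF charF.
Lemma hfp x : ratr x = fp x. Proof. by []. Qed.

Lemma Zp_ratr q : Zp (ratr q) <-> ~~ (p %| `|denq q|)%N.
Proof.
have [->|hq] := eqVneq q 0.
  by rewrite hfp rmorph0 /=; split => _; [rewrite Euclid_dvd1 | exact: Zp0].
rewrite /Zp_int abs_rat // /padic_abs_rat.
rewrite -(expr0z (p%:R : R)) ler_eXz2l ?p_gt1 // subr_le0 lez_nat.
have cop := coprime_num_den q.
case hd: (p %| `|denq q|)%N; split => //=.
- have h1 : (0 < logn p `|denq q|)%N.
    by rewrite logn_gt0 mem_primes hp hd absz_gt0 denq_neq0.
  have h2 : logn p `|numq q| = 0%N.
    apply/eqP; rewrite -leqn0 leqNgt logn_gt0 mem_primes hp /=.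
    apply/negP => /andP [_ hn].
    have : (p %| gcdn `|numq q| `|denq q|)%N by rewrite dvdn_gcd hn hd.
    by rewrite (eqP cop) Euclid_dvd1.
  by rewrite h2 leqn0 => /eqP h3; move: h1; rewrite h3.
- move=> _; rewrite (_ : logn p `|denq q| = 0%N) //.
  apply/eqP; rewrite -leqn0 leqNgt logn_gt0 mem_primes hp hd /=.
  by rewrite andbF.
Qed.
End Padic.
Definition Opt (F : fieldType) (S : F -> Prop) (c1 c2 : 'I_4 -> F) : Prop :=
  forall m n, (forall i, S (m * c1 i + n * c2 i)) <-> (S m /\ S n).

Section Padic2.
Variables (R : realType) (p : nat) (F : fieldType) (abs : F -> R).
Hypothesis hp : prime p.
Hypothesis H : is_Qp p abs.
Local Notation Zp := (Zp_int abs).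

Lemma ratr_lin (m x n y : rat) : ratr (m * x + n * y) = ratr m * ratr x + ratr n * ratr y :> F.
Proof. by rewrite !(hfp hp H) rmorphD !rmorphM. Qed.
Lemma ratrM_p (x y : rat) : ratr (x * y) = ratr x * ratr y :> F.
Proof. by rewrite !(hfp hp H) rmorphM. Qed.

Lemma Zp_isZ q : isZ q -> Zp (ratr q).
Proof. by move=> /isZP hq; apply/(Zp_ratr hp H); rewrite hq Euclid_dvd1. Qed.

Lemma Zp_lt1 x : abs x < 1 -> Zp x.
Proof. by move=> h; apply: ltW. Qed.

Lemma abs_unit (s : int) : s != 0 -> ~~ (p %| `|s|)%N -> abs (ratr s%:~R) = 1.
Proof.
move=> h0 h; rewrite (abs_rat H) ?intr_eq0 // /padic_abs_rat numq_int denq_int /=.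
rewrite logn1 (_ : logn p `|s| = 0%N) ?subrr ?expr0z //.
apply/eqP; rewrite -leqn0 leqNgt logn_gt0 mem_primes hp /=.
by rewrite (negPf h) andbF.
Qed.

Lemma optA (al be : 'I_4 -> rat) :
  Opt isZ al be -> Opt Zp (fun i => ratr (al i)) (fun i => ratr (be i)).
Proof.
move=> hO.
have hal i : isZ (al i).
  by have := proj2 (hO 1 0) (conj isZ1 isZ0) i; rewrite mul1r mul0r addr0.
have hbe i : isZ (be i).
  by have := proj2 (hO 0 1) (conj isZ0 isZ1) i; rewrite mul1r mul0r add0r.
move=> m n; split; last first.
  by move=> [hm hn] i; apply: (ZpD H); apply: (ZpM H) => //; apply: Zp_isZ.
move=> h.
have [m' hm'] := abs_dense H m ltr01.
have [n' hn'] := abs_dense H n ltr01.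
pose w i := m' * al i + n' * be i.
have hw i : Zp (ratr (w i)).
  have -> : ratr (w i) = (m * ratr (al i) + n * ratr (be i))
                  - (m - ratr m') * ratr (al i) - (n - ratr n') * ratr (be i).
    by rewrite /w ratr_lin; ring.
  apply: (ZpB H); first apply: (ZpB H); first exact: h.
  + by apply: (ZpM H); [apply: Zp_lt1 | apply: Zp_isZ].
  + by apply: (ZpM H); [apply: Zp_lt1 | apply: Zp_isZ].
have hd i : ~~ (p %| `|denq (w i)|)%N by apply/(Zp_ratr hp H).
pose s : int := denq (w i0) * denq (w i1) * denq (w i2) * denq (w i3).
have hs0 : s != 0 by rewrite !mulf_neq0 // denq_neq0.
have hsp : ~~ (p %| `|s|)%N.
  by rewrite !abszM !Euclid_dvdM // !negb_or !hd.
have hsw i : isZ (s%:~R * w i).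
  elim/ord4_cases: i.
  - have -> : s%:~R * w i0 = (numq (w i0))%:~R * (denq (w i1) * denq (w i2) * denq (w i3))%:~R.
      by rewrite numqE !rmorphM /=; ring.
    by apply: isZM; apply: isZ_int.
  - have -> : s%:~R * w i1 = (numq (w i1))%:~R * (denq (w i0) * denq (w i2) * denq (w i3))%:~R.
      by rewrite numqE !rmorphM /=; ring.
    by apply: isZM; apply: isZ_int.
  - have -> : s%:~R * w i2 = (numq (w i2))%:~R * (denq (w i1) * denq (w i0) * denq (w i3))%:~R.
      by rewrite numqE !rmorphM /=; ring.
    by apply: isZM; apply: isZ_int.
  - have -> : s%:~R * w i3 = (numq (w i3))%:~R * (denq (w i1) * denq (w i2) * denq (w i0))%:~R.
      by rewrite numqE !rmorphM /=; ring.
    by apply: isZM; apply: isZ_int.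
have [hsm hsn] : isZ (s%:~R * m') /\ isZ (s%:~R * n').
  apply/hO => i; have := hsw i; rewrite /w.
  by rewrite (_ : s%:~R * (m' * al i + n' * be i) = s%:~R * m' * al i + s%:~R * n' * be i) //; ring.
have unit_cancel q : isZ (s%:~R * q) -> Zp (ratr q).
  move=> /Zp_isZ; rewrite /Zp_int ratrM_p (absM H) (abs_unit hs0 hsp) mul1r //.
have -> : m = ratr m' + (m - ratr m') by ring.
have -> : n = ratr n' + (n - ratr n') by ring.
split; apply: (ZpD H).
- exact: unit_cancel.
- exact: Zp_lt1.
- exact: unit_cancel.
- exact: Zp_lt1.
Qed.
End Padic2.

Unset Implicit Arguments.
Section Global.
Variables (R : realType) (Qp : nat -> fieldType) (absp : forall p : nat, Qp p -> R).
Hypothesis HQp : forall p : nat, prime p -> is_Qp p (absp p).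

Lemma isZ_iff q : isZ q <-> forall p, prime p -> Zp_int (absp p) (ratr q).
Proof.
split; first by move=> h p hp; apply: (Zp_isZ hp (HQp _ hp)).
move=> h; apply/isZP; apply/eqP; apply/negP => /negP /isZ_den [p [hp hd]].
by have := h p hp; move/(Zp_ratr hp (HQp _ hp)); rewrite hd.
Qed.

Lemma optB (al be : 'I_4 -> rat) :
  (forall p, prime p -> Opt (Zp_int (absp p)) (fun i => ratr (al i)) (fun i => ratr (be i))) ->
  Opt isZ al be.
Proof.
move=> hO m n; split.
- move=> h; split; apply/isZ_iff => p hp.
  + apply: (proj1 (proj1 (hO p hp (ratr m) (ratr n)) _)) => i.
    by rewrite /= -(ratr_lin hp (HQp _ hp)); move: (h i); rewrite isZ_iff => /(_ p hp).
  + apply: (proj2 (proj1 (hO p hp (ratr m) (ratr n)) _)) => i.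
    by rewrite /= -(ratr_lin hp (HQp _ hp)); move: (h i); rewrite isZ_iff => /(_ p hp).
- move=> [hm hn] i; apply/isZ_iff => p hp.
  rewrite (ratr_lin hp (HQp _ hp)); apply: (proj2 (hO p hp _ _)).
  by split; move: hp; [move: hm|move: hn]; rewrite isZ_iff => hh hp; apply: hh.
Qed.
End Global.
Set Implicit Arguments.
Section LatF.
Variables (e : 'I_4 -> quat rat) (N : 'I_4 -> 'I_4 -> rat).
Hypothesis hNM : forall k j, \sum_i N k i * vq (e i) j = (k == j)%:R.
Hypothesis hMN : forall i j, \sum_k vq (e i) k * N k j = (i == j)%:R.
Variables (F : fieldType) (f : {rmorphism rat -> F}).
Hypothesis hf : forall x, ratr x = f x.
Variables (a b : rat).
Hypothesis hT : forall i j, lat isZ e (qmul a b (e i) (e j)).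
Variable S : F -> Prop.
Hypothesis SD : forall x y, S x -> S y -> S (x + y).
Hypothesis SM : forall x y, S x -> S y -> S (x * y).
Hypothesis Sint : forall q : rat, isZ q -> S (ratr q).
Local Notation eF := (fun i => @qmap rat F ratr (e i)).
Local Notation L := (lat S eF).
Local Notation mul := (qmul a b).

Lemma isZ_crdQ (x : quat rat) : lat isZ e x -> forall i, isZ (crd N x i).
Proof.
move=> [c [hc ->]] i.
have := @crd_qlin e N hMN rat ratr (fun x => erefl) c i.
have -> : (fun i => qmap ratr (e i)) = e by apply: functional_extensionality => j; rewrite qmap_ratrQ.
by move=> ->.
Qed.

Lemma L_add x y : L x -> L y -> L (qadd x y).
Proof.
rewrite !(lat_crd hNM hMN hf) => hx hy i; rewrite (crd_add N); exact: SD.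
Qed.
Lemma L_scale c x : S c -> L x -> L (qscale c x).
Proof.
rewrite !(lat_crd hNM hMN hf) => hc hx i; rewrite (crd_scale N); exact: SM.
Qed.
Lemma L_map x : lat isZ e x -> L (qmap ratr x).
Proof.
move=> hx; apply/(lat_crd hNM hMN hf) => i.
rewrite (crd_map N hf); apply: Sint; exact: isZ_crdQ.
Qed.
Lemma L_qlin c : (forall i, S (c i)) -> L (qlin c eF).
Proof. by move=> h; exists c. Qed.

Lemma L_mul x y : L x -> L y -> L (mul x y).
Proof.
move=> [c [hc ->]] [c' [hc' ->]].
rewrite /qlin !mulDl !mulZl.
have hr i : L (mul (eF i) (qlin c' eF)).
  rewrite /qlin !mulDr !mulZr.
  by do !(apply: L_add); apply: L_scale => //; rewrite -(qmap_mul _ _ hf); apply: L_map.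
by do !(apply: L_add); apply: L_scale.
Qed.

Lemma L_conj k y : L k -> L (qinv a b k) -> qnrd a b k != 0 -> (L y <-> L (mul (mul k y) (qinv a b k))).
Proof.
move=> hk hik hn; split => h; first by apply: L_mul => //; apply: L_mul.
have -> : y = mul (mul (qinv a b k) (mul (mul k y) (qinv a b k))) k.
  by rewrite -!qmulA mulVq // mul1q qmulA mulVq // mulq1.
by apply: L_mul => //; apply: L_mul.
Qed.
End LatF.

Section OptE.
Variables (e : 'I_4 -> quat rat) (N : 'I_4 -> 'I_4 -> rat).
Hypothesis hNM : forall k j, \sum_i N k i * vq (e i) j = (k == j)%:R.
Hypothesis hMN : forall i j, \sum_k vq (e i) k * N k j = (i == j)%:R.
Variables (F : fieldType) (f : {rmorphism rat -> F}).
Hypothesis hf : forall x, ratr x = f x.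
Variables (a b : rat) (d : int).
Local Notation eF := (fun i => @qmap rat F ratr (e i)).
Local Notation w := (omega F d).

Lemma w2_neq0 : w.2 != 0.
Proof.
rewrite /omega; case: ifP => _ /=; last exact: oner_neq0.
by rewrite hf fmorph_eq0 mul1r invr_eq0 pnatr_eq0.
Qed.

Definition on_ (x : F * F) := x.2 / w.2.
Definition om_ (x : F * F) := x.1 - on_ x * w.1.

Lemma oE_iff (S : F -> Prop) x : oE d S x <-> S (om_ x) /\ S (on_ x).
Proof.
have hw := w2_neq0.
split.
- move=> [m [n [hm [hn ->]]]]; rewrite /om_ /on_ /eadd /escale /=.
  by rewrite add0r mulfK // addrK.
- move=> [h1 h2]; exists (om_ x), (on_ x); split => //; split => //.
  rewrite /om_ /on_ /eadd /escale /= add0r mulfVK // subrK.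
  by clear h1 h2; case: x.
Qed.

Lemma emb_decomp (i : F * F -> quat F) x :
  (forall x y, i (eadd x y) = qadd (i x) (i y)) ->
  (forall c x, i (escale c x) = qscale c (i x)) ->
  i x = qadd (qscale (om_ x) (i (1, 0))) (qscale (on_ x) (i w)).
Proof.
move=> hA hS; rewrite -hS -hS -hA; congr i.
have hw := w2_neq0.
rewrite /om_ /on_ /eadd /escale /=; case: x => x1 x2 /=.
by rewrite mulr1 mulr0 add0r mulfVK // subrK.
Qed.

Lemma opt_iff (S : F -> Prop) (i : F * F -> quat F) :
  (forall x y, i (eadd x y) = qadd (i x) (i y)) ->
  (forall c x, i (escale c x) = qscale c (i x)) ->
  ((forall x, lat S eF (i x) <-> oE d S x) <->
   Opt S (crd N (i (1, 0))) (crd N (i w))).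
Proof.
move=> hA hS.
have hc x j : crd N (i x) j = om_ x * crd N (i (1,0)) j + on_ x * crd N (i w) j.
  by rewrite (emb_decomp x hA hS) crd_add !crd_scale.
have hw := w2_neq0.
split.
- move=> h m n.
  pose x := eadd (m, 0) (escale n w).
  have hom : om_ x = m by rewrite /x /om_ /on_ /eadd /escale /= add0r mulfK // addrK.
  have hon : on_ x = n by rewrite /x /on_ /eadd /escale /= add0r mulfK.
  rewrite -hom -hon -oE_iff -h (lat_crd hNM hMN hf).
  by split => hh j; [rewrite hc; apply: hh | rewrite -hc; apply: hh].
- move=> h x; rewrite (lat_crd hNM hMN hf) oE_iff -h.
  by split => hh j; [rewrite -hc; apply: hh | rewrite hc; apply: hh].
Qed.
End OptE.
From Stdlib Require Import Classical_Prop.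
Lemma emb_dec (F : fieldType) a b d (i : F * F -> quat F) : is_emb a b d i ->
  forall x, i x = qadd (qscale x.1 (qone F)) (qscale x.2 (i (0, 1))).
Proof.
move=> [hA [hS [_ [h1 _]]]] x.
rewrite -h1 -!hS -hA; congr i; case: x => x1 x2.
by rewrite /eadd /escale /=; congr pair; ring.
Qed.

Section Rat.
Variables (a b : rat).
Hypothesis ha : a < 0.
Hypothesis hb : b < 0.
Local Notation mul := (qmul a b).
Local Notation inv := (qinv a b).
Local Notation nrd := (qnrd a b).
Local Notation one := (qone rat).

Lemma nrd_neq0 (x : quat rat) : x <> qzero rat -> nrd x != 0.
Proof.
case: x => x0 x1 x2 x3 hx; apply/negP => /eqP h; apply: hx.
move: h; rewrite /qnrd /= !ratrQ => h.
have t0 : 0 <= x0 ^+ 2 by rewrite sqr_ge0.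
have t1 : 0 <= - a * x1 ^+ 2 by rewrite mulr_ge0 ?sqr_ge0 // oppr_ge0 ltW.
have t2 : 0 <= - b * x2 ^+ 2 by rewrite mulr_ge0 ?sqr_ge0 // oppr_ge0 ltW.
have t3 : 0 <= a * b * x3 ^+ 2 by rewrite mulr_ge0 ?sqr_ge0 // nmulr_rge0 // ltW.
have e0 : x0 ^+ 2 = 0 by lra.
have e1 : - a * x1 ^+ 2 = 0 by lra.
have e2 : - b * x2 ^+ 2 = 0 by lra.
have e3 : a * b * x3 ^+ 2 = 0 by lra.
have -> : x0 = 0 by apply/eqP; rewrite -sqrf_eq0; apply/eqP.
have -> : x1 = 0.
  apply/eqP; rewrite -sqrf_eq0; apply/eqP; apply: (mulfI (_ : - a != 0)); last by rewrite mulr0.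
  by rewrite oppr_eq0 ltr0_neq0.
have -> : x2 = 0.
  apply/eqP; rewrite -sqrf_eq0; apply/eqP; apply: (mulfI (_ : - b != 0)); last by rewrite mulr0.
  by rewrite oppr_eq0 ltr0_neq0.
have -> : x3 = 0.
  apply/eqP; rewrite -sqrf_eq0; apply/eqP; apply: (mulfI (_ : a * b != 0)); last by rewrite mulr0.
  by rewrite mulf_neq0 // ltr0_neq0.
by [].
Qed.

Lemma qaddC (x y : quat rat) : qadd x y = qadd y x.
Proof. by case: x; case: y => *; apply: quat_ext; rewrite /= addrC. Qed.

Variables (d : int) (io : rat * rat -> quat rat).
Hypothesis hio : is_emb a b d io.
Local Notation u := (io (0, 1)).

Lemma io_add x y : io (eadd x y) = qadd (io x) (io y). Proof. by case: hio. Qed.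
Lemma io_scale c x : io (escale c x) = qscale c (io x). Proof. by case: hio => _ []. Qed.
Lemma io_mul x y : io (emul d x y) = mul (io x) (io y). Proof. by case: hio => _ [_ []]. Qed.
Lemma io_one : io (1, 0) = one. Proof. by case: hio => _ [_ [_ []]]. Qed.
Lemma io_inj : injective io. Proof. by case: hio => _ [_ [_ [_ ]]]. Qed.

Lemma io_decomp x : io x = qadd (qscale x.1 one) (qscale x.2 u).
Proof.
rewrite -io_one -!io_scale -io_add; congr io; case: x => x1 x2.
by rewrite /eadd /escale /=; congr pair; ring.
Qed.

Lemma io_zero : io (0, 0) = qzero rat.
Proof.
have -> : ((0 : rat), (0 : rat)) = escale 0 (1, 0) by rewrite /escale /= mul0r.
by rewrite io_scale scale0.
Qed.

Lemma io_nz x : x != (0, 0) -> io x <> qzero rat.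
Proof. by move=> hx h; move: hx; rewrite -io_zero in h; rewrite (io_inj h) eqxx. Qed.

Lemma uu : mul u u = qscale d%:~R one.
Proof.
rewrite -io_mul -io_one -io_scale; congr io.
by rewrite /emul /escale /= !mulr0 !mul0r !mulr1 addr0 add0r.
Qed.

Lemma u_nonscalar c : u <> qscale c one.
Proof.
move=> h; have : io (0, 1) = io (c, 0).
  by rewrite h -io_one -io_scale /escale /=; congr (io (_, _)); ring.
by move/io_inj => [_].
Qed.

Lemma io_comm x y : mul (io x) (io y) = mul (io y) (io x).
Proof.
rewrite -!io_mul; congr io; case: x => x1 x2; case: y => y1 y2.
by rewrite /emul /=; congr pair; ring.
Qed.

Lemma u_pure : q0 u = 0.
Proof.
have h := uu; have hn : forall c, u <> qscale c one := fun c => @u_nonscalar c.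
move: h hn; case: u => u0 u1 u2 u3 h hn.
have e1 := congr1 (@q1 _) h; have e2 := congr1 (@q2 _) h; have e3 := congr1 (@q3 _) h.
move: e1 e2 e3; rewrite /qmul /qscale /qone /= !ratrQ !mulr0 => e1 e2 e3.
have [//|h0] := eqVneq u0 0.
exfalso; apply: (hn u0).
have z1 : u1 = 0.
  apply/eqP; move: e1; rewrite (_ : u0 * u1 + u1 * u0 - b * u2 * u3 + b * u3 * u2 = (u0 + u0) * u1); last by ring.
  by move/eqP; rewrite mulf_eq0 => /orP [|//]; rewrite -mulr2n mulrn_eq0 (negPf h0).
have z2 : u2 = 0.
  apply/eqP; move: e2; rewrite (_ : u0 * u2 + u2 * u0 + a * u1 * u3 - a * u3 * u1 = (u0 + u0) * u2); last by ring.
  by move/eqP; rewrite mulf_eq0 => /orP [|//]; rewrite -mulr2n mulrn_eq0 (negPf h0).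
have z3 : u3 = 0.
  apply/eqP; move: e3; rewrite (_ : u0 * u3 + u3 * u0 + u1 * u2 - u2 * u1 = (u0 + u0) * u3); last by ring.
  by move/eqP; rewrite mulf_eq0 => /orP [|//]; rewrite -mulr2n mulrn_eq0 (negPf h0).
by apply: quat_ext; rewrite /= ?z1 ?z2 ?z3 ?mulr1 ?mulr0.
Qed.

Lemma u_ne : exists2 k : nat, (k = 1 \/ k = 2 \/ k = 3)%N &
  (if k == 1%N then q1 u else if k == 2%N then q2 u else q3 u) != 0.
Proof.
have hn := @u_nonscalar 0; have h0 := u_pure.
move: hn h0; case: u => u0 u1 u2 u3 /= hn h0.
have [z1|] := eqVneq u1 0; last by exists 1%N; [left|].
have [z2|] := eqVneq u2 0; last by exists 2%N; [right; left|].
have [z3|] := eqVneq u3 0; last by exists 3%N; [right; right|].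
by exfalso; apply: hn; apply: quat_ext; rewrite /= ?h0 ?z1 ?z2 ?z3 ?mulr0.
Qed.

Lemma centralizer z : mul z u = mul u z -> exists w, z = io w.
Proof.
move=> hz.
have h0 := u_pure; have [k hk hnz] := u_ne.
have hA : a != 0 by rewrite ltr0_neq0.
have hB : b != 0 by rewrite ltr0_neq0.
suff [lam hl] : exists lam, z = qadd (qscale (q0 z) one) (qscale lam u).
  by exists (q0 z, lam); rewrite io_decomp.
move: hz h0 hnz; case: (io (0, 1)) => u0 u1 u2 u3; case: z => z0 z1 z2 z3 /= hz h0 hnz.
have e1 := congr1 (@q1 _) hz; have e2 := congr1 (@q2 _) hz; have e3 := congr1 (@q3 _) hz.
move: e1 e2 e3; rewrite /qmul /= !ratrQ h0 => e1 e2 e3.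
have c1 : z2 * u3 = z3 * u2.
  apply/eqP; rewrite -subr_eq0; apply/eqP; apply: (mulfI hB); apply: (mulfI (_ : 2 != 0)) => //.
  by rewrite !mulr0; lra.
have c2 : z1 * u3 = z3 * u1.
  apply/eqP; rewrite -subr_eq0; apply/eqP; apply: (mulfI hA); apply: (mulfI (_ : 2 != 0)) => //.
  by rewrite !mulr0; lra.
have c3 : z1 * u2 = z2 * u1 by lra.
case: hk => [hk|[hk|hk]]; rewrite hk /= in hnz.
- exists (z1 / u1); apply: quat_ext; rewrite /= !mulr0 ?add0r ?mulr1 ?addr0 //.
  + by rewrite divfK.
  + by rewrite mulrAC c3 mulfK.
  + by rewrite mulrAC c2 mulfK.
- exists (z2 / u2); apply: quat_ext; rewrite /= !mulr0 ?add0r ?mulr1 ?addr0 //.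
  + by rewrite mulrAC -c3 mulfK.
  + by rewrite divfK.
  + by rewrite mulrAC c1 mulfK.
- exists (z3 / u3); apply: quat_ext; rewrite /= !mulr0 ?add0r ?mulr1 ?addr0 //.
  + by rewrite mulrAC -c2 mulfK.
  + by rewrite mulrAC -c1 mulfK.
  + by rewrite divfK.
Qed.

Lemma gact_T x y : x != (0, 0) -> gact a b (io x) io y = io y.
Proof.
move=> hx; rewrite /gact io_comm qmulA mulV ?mulq1 //; exact: nrd_neq0 (io_nz hx).
Qed.
Lemma gact_Tinv x y : x != (0, 0) -> gact a b (inv (io x)) io y = io y.
Proof.
move=> hx; have hn := nrd_neq0 (io_nz hx).
have <- := @gact_inv _ a b (io x) io y hn.
by have -> : gact a b (io x) io = io by apply: functional_extensionality => z; apply: gact_T.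
Qed.

Lemma SN v : mul v v = qscale d%:~R one -> exists g, g <> qzero rat /\ mul u g = mul g v.
Proof.
move=> hv.
have [huv|huv] := classic (qadd u v = qzero rat); last first.
  exists (qadd u v); split => //.
  by rewrite mulDr mulDl uu hv qaddC.
have hp := u_pure; have [k hk hnz] := u_ne.
move: hv huv hp hnz; case: (io (0, 1)) => u0 u1 u2 u3; case: v => v0 v1 v2 v3 /= hv huv hp hnz.
have e0 := congr1 (@q0 _) huv; have e1 := congr1 (@q1 _) huv.
have e2 := congr1 (@q2 _) huv; have e3 := congr1 (@q3 _) huv.
move: e0 e1 e2 e3 => /= e0 e1 e2 e3.
have -> : v0 = 0 by lra.
have -> : v1 = - u1 by lra.
have -> : v2 = - u2 by lra.
have -> : v3 = - u3 by lra.
rewrite hp.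
have hA : a != 0 by rewrite ltr0_neq0.
pose U := Quat 0 u1 u2 u3.
have [h23|h23] := classic (u2 != 0 \/ u3 != 0).
- pose Y := Quat (0 : rat) 1 0 0.
  exists (qadd (mul U Y) (qscale (-1) (mul Y U))); split.
  + move=> hg; case: h23 => h.
    * have := congr1 (@q3 _) hg; rewrite /= => hh; move/eqP: h; apply; lra.
    * have := congr1 (@q2 _) hg; rewrite /= !ratrQ => hh.
      have : a * u3 = 0 by lra.
      by move/eqP; rewrite mulf_eq0 (negPf hA) /= => /eqP hu; move/eqP: h; apply.
  + apply: quat_ext; rewrite /qmul /qadd /qscale /= !ratrQ; ring.
- have hu1 : u1 != 0.
    case: hk hnz => [->|[->|->]] //= hnz; exfalso; apply: h23; by [left|right].
  pose Y := Quat (0 : rat) 0 1 0.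
  exists (qadd (mul U Y) (qscale (-1) (mul Y U))); split.
  + move=> hg; have := congr1 (@q3 _) hg; rewrite /= => hh; move/eqP: hu1; apply; lra.
  + apply: quat_ext; rewrite /qmul /qadd /qscale /= !ratrQ; ring.
Qed.

Lemma phi_eq g (iota : rat * rat -> quat rat) : nrd g != 0 -> is_emb a b d iota ->
  mul u g = mul g (iota (0, 1)) -> forall x, gact a b (inv g) io x = iota x.
Proof.
move=> hg hi hug x.
rewrite /gact invK // io_decomp (emb_dec hi x).
have hZ c y z w : mul (mul y (qscale c z)) w = qscale c (mul (mul y z) w).
  by rewrite mulZr mulZl.
rewrite mulDr mulDl !hZ mulq1 mulVq //.
by rewrite qmulA hug -qmulA mulVq // mul1q.
Qed.
End Rat.
Lemma content2 (q1 q2 : rat) : exists (r : rat) (u1 u2 k1 k2 : int),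
  r = u1%:~R * q1 + u2%:~R * q2 /\ q1 = k1%:~R * r /\ q2 = k2%:~R * r.
Proof.
pose n1 := numq q1; pose d1 := denq q1; pose n2 := numq q2; pose d2 := denq q2.
have hd1 : (d1%:~R : rat) != 0 by rewrite intr_eq0 denq_neq0.
have hd2 : (d2%:~R : rat) != 0 by rewrite intr_eq0 denq_neq0.
have hq1 : q1 = n1%:~R / d1%:~R by rewrite divq_num_den.
have hq2 : q2 = n2%:~R / d2%:~R by rewrite divq_num_den.
pose z1 := n1 * d2; pose z2 := n2 * d1; pose G := gcdz z1 z2.
have [u [v huv]] := Bezoutz z1 z2.
exists (G%:~R / (d1 * d2)%:~R), u, v, (z1 %/ G)%Z, (z2 %/ G)%Z.
have hG : (G%:~R : rat) = u%:~R * (n1 * d2)%:~R + v%:~R * (n2 * d1)%:~R.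
  by rewrite /G -huv rmorphD !rmorphM.
split; [|split].
- rewrite hG hq1 hq2 !rmorphM /=; field; by rewrite hd1 hd2.
- have := divzK (dvdz_gcdl z1 z2); rewrite -/G => h.
  rewrite mulrA -rmorphM h /z1 hq1 !rmorphM /=; field; by rewrite hd1 hd2.
- have := divzK (dvdz_gcdr z1 z2); rewrite -/G => h.
  rewrite mulrA -rmorphM h /z2 hq2 !rmorphM /=; field; by rewrite hd1 hd2.
Qed.

Lemma content4 (r : 'I_4 -> rat) : exists rho : rat,
  (exists u : 'I_4 -> int, rho = \sum_i (u i)%:~R * r i) /\
  (forall i, exists k : int, r i = k%:~R * rho).
Proof.
have [r1 [u1 [u2 [k1 [k2 [e1 [e2 e3]]]]]]] := content2 (r i0) (r i1).
have [r2 [u3 [u4 [k3 [k4 [f1 [f2 f3]]]]]]] := content2 (r i2) (r i3).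
have [r3 [v1 [v2 [l1 [l2 [g1 [g2 g3]]]]]]] := content2 r1 r2.
exists r3; split.
- exists (fun i : 'I_4 => if val i == 0%N then v1 * u1 else if val i == 1%N then v1 * u2
                     else if val i == 2%N then v2 * u3 else v2 * u4).
  rewrite sum4 /= g1 e1 f1 !rmorphM /=; ring.
- elim/ord4_cases.
  + by exists (k1 * l1); rewrite e2 g2 rmorphM mulrA.
  + by exists (k2 * l1); rewrite e3 g2 rmorphM mulrA.
  + by exists (k3 * l2); rewrite f2 g3 rmorphM mulrA.
  + by exists (k4 * l2); rewrite f3 g3 rmorphM mulrA.
Qed.

Lemma is_emb_nrd (F : fieldType) a b d g (i : F * F -> quat F) :
  is_emb a b d (gact a b g i) -> qnrd a b g != 0.
Proof.
move=> [_ [_ [_ [h1 _]]]]; apply/negP => /eqP h0.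
move: h1; rewrite /gact /qinv h0 invr0 scale0.
move/(congr1 (@q0 _)); rewrite /qmul /qzero /= !mulr0 !subr0 !addr0 => /eqP.
by rewrite eq_sym oner_eq0.
Qed.

Section EmbExt.
Variables (F : fieldType) (f : {rmorphism rat -> F}).
Hypothesis hf : forall x, ratr x = f x.
Variables (a b : rat) (d : int) (io : rat * rat -> quat rat).
Hypothesis hio : is_emb a b d io.
Local Notation qm := (@qmap rat F ratr).
Local Notation ioF := (emb_ext (F := F) io).

Lemma ioF_map x : ioF (ratr x.1, ratr x.2) = qm (io x).
Proof.
rewrite /emb_ext (emb_dec hio x) (qmap_add hf) !(qmap_scale hf) (qmap_one hf) /=.
by [].
Qed.

Lemma emb_ext_is_emb : is_emb a b d ioF.
Proof.
have hu := uu hio; have hp := u_pure hio; have [k hk hnz] := u_ne hio.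
set w1 := (ratr (q1 (io (0,1))) : F); set w2 := (ratr (q2 (io (0,1))) : F).
set w3 := (ratr (q3 (io (0,1))) : F).
have hun : qm (io (0, 1)) = Quat 0 w1 w2 w3 by rewrite /qmap hp hf rmorph0.
have hu' : qmul a b (Quat 0 w1 w2 w3) (Quat 0 w1 w2 w3) = qscale (d%:~R) (qone F).
  by rewrite -hun -(qmap_mul _ _ hf) hu (qmap_scale hf) (qmap_one hf) hf rmorph_int.
have e0 : (d%:~R : F) = ratr a * w1 * w1 + ratr b * w2 * w2 - ratr a * ratr b * w3 * w3.
  have := congr1 (@q0 _) hu'; rewrite /qmul /qscale /qone /= mulr1 => <-; ring.
rewrite /emb_ext hun.
split; [|split; [|split; [|split]]].
- move=> x y; apply: quat_ext; rewrite /eadd /= ; ring.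
- move=> c x; apply: quat_ext; rewrite /escale /= ; ring.
- move=> [x1 x2] [y1 y2]; rewrite /emul /=.
  clearbody w1 w2 w3; by apply: quat_ext; rewrite /qmul /qadd /qscale /qone /= ?e0; ring.
- by apply: quat_ext; rewrite /=; ring.
- move=> [x1 x2] [y1 y2] h.
  have e0' := congr1 (@q0 _) h; have e1 := congr1 (@q1 _) h.
  have e2 := congr1 (@q2 _) h; have e3 := congr1 (@q3 _) h.
  move: e0' e1 e2 e3; rewrite /= !mulr0 !mulr1 !addr0 !add0r => -> e1 e2 e3.
  congr pair.
  have hw : (if k == 1%N then w1 else if k == 2%N then w2 else w3) != 0.
    by case: hk hnz => [->|[->|->]] /= hnz; rewrite ?/w1 ?/w2 ?/w3 hf fmorph_eq0.
  case: hk hw => [->|[->|->]] /= hw; apply: (mulIf hw); assumption.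
Qed.
End EmbExt.

Section EmbExt2.
Variables (F : fieldType) (f : {rmorphism rat -> F}).
Hypothesis hf : forall x, ratr x = f x.
Variables (a b : rat) (d : int) (io : rat * rat -> quat rat).
Hypothesis hio : is_emb a b d io.
Local Notation qm := (@qmap rat F ratr).
Local Notation ioF := (emb_ext (F := F) io).

Lemma map_emb g x :
  gact a b (qinv a b (qm g)) ioF (ratr x.1, ratr x.2) = qm (gact a b (qinv a b g) io x).
Proof.
by rewrite /gact (ioF_map hf hio) -!(qmap_inv _ _ hf) -!(qmap_mul _ _ hf).
Qed.

Lemma omega_map : omega F d = (ratr (omega rat d).1, ratr (omega rat d).2).
Proof. by rewrite /omega; case: ifP => _ /=; rewrite ?ratrQ // !hf ?rmorph0 ?rmorph1. Qed.
End EmbExt2.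

Lemma charR (R : numFieldType) n : (n.+1)%:R != 0 :> R.
Proof. by rewrite pnatr_eq0. Qed.

Lemma lat_basis (F : fieldType) (S : F -> Prop) (e : 'I_4 -> quat F) i :
  S 0 -> S 1 -> lat S e (e i).
Proof.
move=> h0 h1; exists (fun j => if j == i then 1 else 0); split.
  by move=> j; case: ifP.
apply: quat_ext; rewrite /qlin /=; elim/ord4_cases: i;
  rewrite /= !mul0r !mul1r ?add0r ?addr0 //.
Qed.
Unset Implicit Arguments.
Lemma dvd_prod4 (g : 'I_4 -> nat) i : (g i %| \prod_j g j)%N.
Proof. by rewrite (bigD1 i) //= dvdn_mulr. Qed.

Section Main.
Variables (R : realType) (Qp : nat -> fieldType) (absp : forall p : nat, Qp p -> R).
Hypothesis HQp : forall p : nat, prime p -> is_Qp p (absp p).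
Variables (a b : rat).
Hypothesis ha : a < 0.
Hypothesis hb : b < 0.
Variables (e : 'I_4 -> quat rat) (N : 'I_4 -> 'I_4 -> rat).
Hypothesis hNM : forall k j, \sum_i N k i * vq (e i) j = (k == j)%:R.
Hypothesis hMN : forall i j, \sum_k vq (e i) k * N k j = (i == j)%:R.
Hypothesis hone : lat isZ e (qone rat).
Hypothesis hmulO : forall x y, lat isZ e x -> lat isZ e y -> lat isZ e (qmul a b x y).
Variables (d : int) (io : rat * rat -> quat rat).
Hypothesis hio0 : opt_emb a b d isZ e io.

Local Notation mul := (qmul a b).
Local Notation inv := (qinv a b).
Local Notation nrd := (qnrd a b).
Local Notation Gamma := (inK a b isZ e).
Local Notation Kp := (fun p => inK a b (Zp_int (absp p)) (fun i => qmap ratr (e i))).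

Lemma hio : is_emb a b d io. Proof. by case: hio0. Qed.
Definition fQ := ratrF (@charR rat).
Lemma hfQ x : ratr x = fQ x. Proof. by []. Qed.
Definition fR := ratrF (@charR R).
Lemma hfR x : ratr x = fR x. Proof. by []. Qed.
Lemma hT i j : lat isZ e (mul (e i) (e j)).
Proof. by apply: hmulO; apply: lat_basis; [exact: isZ0|exact: isZ1|exact: isZ0|exact: isZ1]. Qed.
Lemma eE : (fun i => @qmap rat rat ratr (e i)) = e.
Proof. by apply: functional_extensionality => i; rewrite qmap_ratrQ. Qed.
Lemma latQ y : lat isZ e y <-> forall i, isZ (crd N y i).
Proof. by have := lat_crd hNM hMN hfQ isZ y; rewrite eE. Qed.
Lemma nrdq {g} : g <> qzero rat -> nrd g != 0.
Proof. move=> h; exact: (@nrd_neq0 a b ha hb g h). Qed.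
Lemma crd0 y : (forall i, crd N y i = 0) -> y = qzero rat.
Proof.
move=> h; have := qlin_crd hNM hfQ y; rewrite eE => <-.
by apply: quat_ext; rewrite /qlin /= !h; ring.
Qed.

Lemma Gamma_nz {gam} : Gamma gam -> gam <> qzero rat.
Proof. by move=> [c [hc [hnz _]]] h; apply: hnz; rewrite h scaleq0. Qed.
Lemma Gamma_inv {gam} : Gamma gam -> Gamma (inv gam).
Proof.
move=> hg; have hn := nrdq (Gamma_nz hg); move: hg => [c [hc [hnz [h1 h2]]]].
have hnc := nrdq hnz.
exists c^-1; split; first by rewrite invr_eq0.
rewrite -invZ; split; first exact: nrd_neq0_nz (nrd_inv_neq0 hnc).
by rewrite invK.
Qed.
Lemma Gamma_one : Gamma (qone rat).
Proof.
exists 1; rewrite scale1 inv1; split; first exact: oner_neq0.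
split => //; move/(congr1 (@q0 _)) => /= /eqP; by rewrite oner_eq0.
Qed.

Section AtP.
Variables (p : nat) (hp : prime p).
Let Hp := HQp p hp.
Let hf := hfp hp Hp.
Local Notation Zp := (Zp_int (absp p)).
Local Notation LF := (lat Zp (fun i => @qmap rat (Qp p) ratr (e i))).

Lemma LF_map {y} : lat isZ e y -> LF (qmap ratr y).
Proof. exact: (L_map hNM hMN hf (Zp_isZ hp Hp)). Qed.

Lemma Gamma_mapK {gam} : Gamma gam -> Kp p (qmap ratr gam).
Proof.
move=> [c [hc [hnz [h1 h2]]]]; exists (ratr c); split; first exact: (ratr_neq0 hf).
rewrite -(qmap_scale hf) -(qmap_inv _ _ hf); split; first exact: (qmap_nz hf).
by split; apply: LF_map.
Qed.

Lemma LF_crd y : LF y <-> forall i, Zp (crd N y i).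
Proof. exact: (lat_crd hNM hMN hf). Qed.
End AtP.

Lemma part1a g h :
  (g <> qzero rat /\ opt_emb a b d isZ e (gact a b (inv g) io)) ->
  (h <> qzero rat /\ opt_emb a b d isZ e (gact a b (inv h) io)) ->
  ((exists t gam, (exists x : rat * rat, x != (0, 0) /\ t = io x) /\ Gamma gam /\
       projeq (mul (mul t g) gam) h) <->
   (exists gam, Gamma gam /\ forall x, gact a b gam (gact a b (inv g) io) x = gact a b (inv h) io x)).
Proof.
move=> [hg _] [hh _]; have hng := nrdq hg; have hnh := nrdq hh.
split.
- move=> [t [gam [[x [hx ->]] [hgam [c [hc ->]]]]]].
  exists (inv gam); split; first exact: Gamma_inv.
  move=> y.
  have hTi : gact a b (inv (io x)) io = io.
    by apply: functional_extensionality => z; apply: (gact_Tinv ha hb hio z hx).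
  have h2 : gact a b (mul (inv g) (inv (io x))) io = gact a b (inv g) io.
    by apply: functional_extensionality => z; rewrite gactM hTi.
  by rewrite invZ gactZ ?invr_eq0 // !invM gactM h2.
- move=> [gam [hgam hfun]].
  have hngam := nrdq (Gamma_nz hgam).
  have hfe : gact a b gam (gact a b (inv g) io) = gact a b (inv h) io.
    by apply: functional_extensionality.
  have [z hzdef] : exists z, z = mul (mul h gam) (inv g) by eexists.
  have hnz : nrd z != 0.
    by rewrite hzdef; apply: nrdM_neq0; [apply: nrdM_neq0|apply: nrd_inv_neq0].
  have hzio y : gact a b z io y = io y.
    by rewrite hzdef gactM gactM hfe (gact_invr io y hnh).
  have hcomm : mul z (io (0, 1)) = mul (io (0, 1)) z.
    have := hzio (0, 1); rewrite /gact => hh'.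
    by rewrite -[in RHS]hh' [RHS]qmulA mulVq // mulq1.
  have [w hw] := centralizer ha hb hio hcomm.
  have hw0 : w != (0, 0).
    apply/negP => /eqP hw0; move: hnz; rewrite hw hw0 (io_zero hio) nrd0 eqxx //.
  exists z, (inv gam); split; first by exists w.
  split; first exact: Gamma_inv.
  exists 1; split; first exact: oner_neq0.
  rewrite scale1 hzdef.
  by rewrite (@qmulA _ a b (mul h gam) (inv g) g) mulVq // mulq1 qmulA mulV // mulq1.
Qed.

Lemma part1b iota : opt_emb a b d isZ e iota ->
  exists g, (g <> qzero rat /\ opt_emb a b d isZ e (gact a b (inv g) io)) /\
    exists gam, Gamma gam /\ forall x, gact a b gam (gact a b (inv g) io) x = iota x.
Proof.
move=> [hie hiopt].
have [g [hg hug]] := SN ha hio (uu hie).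
have hng := nrdq hg.
have hphi : gact a b (inv g) io = iota.
  by apply: functional_extensionality; apply: (phi_eq hio hng hie hug).
exists g; split; first by split => //; rewrite hphi.
exists (qone rat); split; first exact: Gamma_one.
by move=> x; rewrite gact1 hphi.
Qed.

Lemma opt_rat {g} : opt_emb a b d isZ e (gact a b (inv g) io) ->
  Opt isZ (crd N (gact a b (inv g) io (1, 0))) (crd N (gact a b (inv g) io (omega rat d))).
Proof.
move=> [hem hopt]; have [hA [hS _]] := hem.
by have := opt_iff hNM hMN hfQ d isZ hA hS; rewrite eE => h; apply/h.
Qed.

Lemma part2a g : g <> qzero rat /\ opt_emb a b d isZ e (gact a b (inv g) io) ->
  @qmap rat R ratr g <> qzero R /\
  (forall p, prime p -> @qmap rat (Qp p) ratr g <> qzero (Qp p) /\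
     opt_emb a b d (Zp_int (absp p)) (fun i => qmap ratr (e i))
        (gact a b (inv (@qmap rat (Qp p) ratr g)) (emb_ext io))) /\
  exists N0 : nat, forall p, prime p -> (N0 < p)%N -> Kp p (@qmap rat (Qp p) ratr g).
Proof.
move=> [hg hB]; have hng := nrdq hg.
have hOpt := opt_rat hB.
split; first exact: (qmap_nz hfR hg).
split.
- move=> p hp; have Hp := HQp p hp; have hf := hfp hp Hp.
  split; first exact: (qmap_nz hf hg).
  have hemb : is_emb a b d (gact a b (inv (qmap ratr g)) (emb_ext (F := Qp p) io)).
    apply: is_emb_gact; first exact: nrd_inv_neq0 (qmap_nrd_neq0 hf hng).
    exact: (emb_ext_is_emb hf hio).
  split => //.
  have [hA [hS _]] := hemb.
  apply/(opt_iff hNM hMN hf d _ hA hS).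
  have h10 : ((1 : Qp p), (0 : Qp p)) = (ratr ((1, 0) : rat * rat).1, ratr ((1, 0) : rat * rat).2).
    by rewrite /= !hf rmorph1 rmorph0.
  rewrite h10 (omega_map hf) !(map_emb hf hio).
  have hc : forall y, crd N (@qmap rat (Qp p) ratr y) = fun j => ratr (crd N y j).
    by move=> y; apply: functional_extensionality => j; rewrite (crd_map N hf).
  rewrite !hc; exact: (optA hp Hp hOpt).
- pose Nn := (\prod_(i < 4) (`|denq (crd N g i)| * `|denq (crd N (inv g) i)|))%N.
  exists Nn => p hp hlt; have Hp := HQp p hp; have hf := hfp hp Hp.
  have hden : forall q : rat, (`|denq q| %| Nn)%N -> Zp_int (absp p) (ratr q).
    move=> q hq; apply/(Zp_ratr hp Hp); apply/negP => hpd.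
    have hNn : (0 < Nn)%N by apply: prodn_gt0 => i; rewrite muln_gt0 !absz_gt0 !denq_neq0.
    by have := dvdn_leq hNn (dvdn_trans hpd hq); rewrite leqNgt hlt.
  exists 1; rewrite scale1; split; first exact: oner_neq0.
  split; first exact: (qmap_nz hf hg).
  rewrite -(qmap_inv _ _ hf); split; apply/(LF_crd p hp) => i; rewrite (crd_map N hf); apply: hden.
  + by apply: dvdn_trans (dvd_prod4 _ i); apply: dvdn_mulr.
  + by apply: dvdn_trans (dvd_prod4 _ i); apply: dvdn_mull.
Qed.

Lemma part2b g h : g <> qzero rat -> h <> qzero rat ->
  ((exists t gam, (exists x : rat * rat, x != (0, 0) /\ t = io x) /\ Gamma gam /\
       projeq (mul (mul t g) gam) h) <->
   (exists t (k : adele R Qp), (exists x : rat * rat, x != (0, 0) /\ t = io x) /\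
       (k.1 <> qzero R /\ forall p, prime p -> Kp p (k.2 p)) /\
       projeq (mul (mul (@qmap rat R ratr t) (@qmap rat R ratr g)) k.1) (@qmap rat R ratr h) /\
       forall p, prime p -> projeq (mul (mul (@qmap rat (Qp p) ratr t) (@qmap rat (Qp p) ratr g)) (k.2 p))
                                   (@qmap rat (Qp p) ratr h))).
Proof.
move=> hg hh; split.
- move=> [t [gam [hTt [hgam [c [hc hhc]]]]]].
  exists t, (qmap ratr gam, fun p => qmap ratr gam); split => //.
  split; first split.
  + exact: (qmap_nz hfR (Gamma_nz hgam)).
  + by move=> p hp; apply: (Gamma_mapK p hp hgam).
  split.
  + exists (ratr c); split; first exact: (ratr_neq0 hfR hc).
    by rewrite hhc (qmap_scale hfR) !(qmap_mul _ _ hfR).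
  + move=> p hp; have hf := hfp hp (HQp p hp).
    exists (ratr c); split; first exact: (ratr_neq0 hf hc).
    by rewrite hhc (qmap_scale hf) !(qmap_mul _ _ hf).
- move=> [t [k [hTt [[hk1 hkp] [_ hpp]]]]].
  have [x [hx ht]] := hTt.
  have ht0 : t <> qzero rat by rewrite ht; exact: (io_nz hio hx).
  have hnt := nrdq ht0; have hng := nrdq hg; have hnh := nrdq hh.
  have hntg : nrd (mul t g) != 0 := nrdM_neq0 hnt hng.
  pose gm := mul (inv (mul t g)) h.
  have hgm : nrd gm != 0 := nrdM_neq0 (nrd_inv_neq0 hntg) hnh.
  have loc : forall p, prime p -> exists sig : Qp p, sig != 0 /\
      (forall i, Zp_int (absp p) (sig * ratr (crd N gm i))) /\
      (forall j, Zp_int (absp p) (sig^-1 * ratr (crd N (inv gm) j))).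
    move=> p hp; have Hp := HQp p hp; have hf := hfp hp Hp.
    have [c [hc hcp]] := hpp p hp.
    have [s [hs [_ [hl1 hl2]]]] := hkp p hp.
    have hT' : nrd (mul (@qmap rat (Qp p) ratr t) (@qmap rat (Qp p) ratr g)) != 0.
      by rewrite -(qmap_mul _ _ hf); exact: (qmap_nrd_neq0 hf hntg).
    have hk : k.2 p = qscale c^-1 (qmap ratr gm).
      rewrite /gm (qmap_mul _ _ hf) (qmap_inv _ _ hf) (qmap_mul _ _ hf) hcp mulZr scaleA mulVf // scale1.
      by rewrite -qmulA mulVq // mul1q.
    exists (s / c); split; first by rewrite mulf_neq0 ?invr_eq0.
    rewrite hk scaleA in hl1 hl2.
    split.
    + move=> i; have := proj1 (LF_crd p hp _) hl1 i; by rewrite (crd_scale N) (crd_map N hf).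
    + move=> j; move: hl2; rewrite invZ -(qmap_inv _ _ hf) => hl2.
      have := proj1 (LF_crd p hp _) hl2 j; by rewrite (crd_scale N) (crd_map N hf).
  have [rho [[u hu] hk]] := content4 (crd N gm).
  have hrho : rho != 0.
    apply/negP => /eqP h0.
    have : gm = qzero rat by apply: crd0 => i; have [ki ->] := hk i; rewrite h0 mulr0.
    exact: (nrd_neq0_nz hgm).
  have hr' : forall j, isZ (rho * crd N (inv gm) j).
    move=> j; apply/(isZ_iff R Qp absp HQp) => p hp.
    have Hp := HQp p hp; have hf := hfp hp Hp.
    have [sig [hs [h1 h2]]] := loc p hp.
    have -> : ratr (rho * crd N (inv gm) j) = \sum_i ratr ((u i)%:~R : rat) *
        ((sig * ratr (crd N gm i)) * (sig^-1 * ratr (crd N (inv gm) j))) :> Qp p.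
      rewrite hu [in LHS]hf rmorphM rmorph_sum big_distrl /=; apply: eq_bigr => i _.
      by rewrite !hf rmorphM /=; field.
    have hterm : forall i, Zp_int (absp p) (ratr ((u i)%:~R : rat) *
        ((sig * ratr (crd N gm i)) * (sig^-1 * ratr (crd N (inv gm) j)))).
      move=> i; apply: (ZpM Hp); first by apply: (Zp_isZ hp Hp); apply: isZ_int.
      by apply: (ZpM Hp).
    by rewrite sum4; repeat apply: (ZpD Hp); apply: hterm.
  pose gam := qscale rho^-1 gm.
  have hgamG : Gamma gam.
    exists 1; rewrite scale1; split; first exact: oner_neq0.
    split; first by apply: scale_nz; [rewrite invr_eq0 | exact: (nrd_neq0_nz hgm)].
    split.
    + apply/latQ => i; rewrite (crd_scale N); have [ki ->] := hk i.
      by rewrite mulrCA mulVf // mulr1; apply: isZ_int.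
    + rewrite /gam invZ invrK; apply/latQ => j; rewrite (crd_scale N); exact: hr' j.
  exists t, gam; split => //; split => //.
  exists rho; split => //.
  by rewrite /gam /gm mulZr scaleA mulfV // scale1 -qmulA mulV // mul1q.
Qed.

Hypothesis Hclass1 : forall x : adele R Qp,
     (x.1 <> qzero R /\ (forall p, prime p -> x.2 p <> qzero (Qp p)) /\
      exists N : nat, forall p, prime p -> (N < p)%N ->
        inK a b (Zp_int (absp p)) (fun i => qmap ratr (e i)) (x.2 p)) ->
     exists (g : quat rat) (k : adele R Qp),
       g <> qzero rat /\ k.1 <> qzero R /\
       (forall p, prime p -> inK a b (Zp_int (absp p)) (fun i => qmap ratr (e i)) (k.2 p)) /\
       projeq (qmul a b (qmap ratr g) k.1) x.1 /\
       forall p, prime p -> projeq (qmul a b (qmap ratr g) (k.2 p)) (x.2 p).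

Lemma part2c (x : adele R Qp) :
  x.1 <> qzero R /\ (forall p, prime p -> x.2 p <> qzero (Qp p) /\
      opt_emb a b d (Zp_int (absp p)) (fun i => qmap ratr (e i)) (gact a b (inv (x.2 p)) (emb_ext io))) /\
    (exists N0 : nat, forall p, prime p -> (N0 < p)%N -> Kp p (x.2 p)) ->
  exists g, (g <> qzero rat /\ opt_emb a b d isZ e (gact a b (inv g) io)) /\
   exists t (k : adele R Qp), (exists y : rat * rat, y != (0, 0) /\ t = io y) /\
      (k.1 <> qzero R /\ forall p, prime p -> Kp p (k.2 p)) /\
      projeq (mul (mul (@qmap rat R ratr t) (@qmap rat R ratr g)) k.1) x.1 /\
      forall p, prime p -> projeq (mul (mul (@qmap rat (Qp p) ratr t) (@qmap rat (Qp p) ratr g)) (k.2 p)) (x.2 p).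
Proof.
move=> [hx1 [hxB [N0 hN0]]].
have [g [k [hg [hk1 [hkp [hp1 hpp]]]]]] :=
  Hclass1 x (conj hx1 (conj (fun p hp => proj1 (hxB p hp)) (ex_intro _ N0 hN0))).
have hng := nrdq hg.
exists g; split.
- split => //.
  have hem : is_emb a b d (gact a b (inv g) io) := is_emb_gact (nrd_inv_neq0 hng) hio.
  split => //.
  have [hA [hS _]] := hem.
  have := opt_iff hNM hMN hfQ d isZ hA hS; rewrite eE => hiff; apply/hiff.
  apply: (optB R Qp absp HQp) => p hp.
  have Hp := HQp p hp; have hf := hfp hp Hp.
  have [hxp0 [hpsi hpsiopt]] := hxB p hp.
  have hnx : nrd (x.2 p) != 0.
    by have := is_emb_nrd hpsi; rewrite nrd_inv invr_eq0.
  have [c [hc hcp]] := hpp p hp.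
  have [s [hs [_ [hl1 hl2]]]] := hkp p hp.
  have hnk : nrd (k.2 p) != 0.
    apply/negP => /eqP h0; move: hnx; rewrite hcp nrdZ nrdM h0 !mulr0 eqxx //.
  have hnka : nrd (qscale s (k.2 p)) != 0 by rewrite nrdZ mulf_neq0 // expf_neq0.
  pose chi := gact a b (qscale s (k.2 p)) (gact a b (inv (x.2 p)) (emb_ext (F := Qp p) io)).
  have hchi_emb : is_emb a b d chi := is_emb_gact hnka hpsi.
  have hchi_opt : forall y, lat (Zp_int (absp p)) (fun i => qmap ratr (e i)) (chi y) <->
                            oE d (Zp_int (absp p)) y.
    move=> y; rewrite -hpsiopt /chi [in X in X <-> _]/gact.
    symmetry; apply: (L_conj hNM hMN hf hT (ZpD Hp) (ZpM Hp) (Zp_isZ hp Hp)) => //.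
  have [hA' [hS' _]] := hchi_emb.
  have := (opt_iff hNM hMN hf d _ hA' hS').1 hchi_opt.
  have hchi_map : forall y : rat * rat,
      chi (ratr y.1, ratr y.2) = qmap ratr (gact a b (inv g) io y).
    move=> y; rewrite /chi -(gactM a b).
    have -> : mul (qscale s (k.2 p)) (inv (x.2 p)) = qscale (s / c) (inv (qmap ratr g)).
      rewrite hcp invZ invM mulZl mulZr scaleA -qmulA mulV // mul1q //.
    by rewrite gactZ ?mulf_neq0 ?invr_eq0 // (map_emb hf hio).
  have h10 : ((1 : Qp p), (0 : Qp p)) = (ratr ((1, 0) : rat * rat).1, ratr ((1, 0) : rat * rat).2).
    by rewrite /= !hf rmorph1 rmorph0.
  have hc' : forall y, crd N (@qmap rat (Qp p) ratr y) = fun j => ratr (crd N y j).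
    by move=> y; apply: functional_extensionality => j; rewrite (crd_map N hf).
  by rewrite h10 (omega_map hf) !hchi_map !hc'.
- exists (qone rat), k; split.
  + by exists (1, 0); split; [rewrite xpair_eqE oner_eq0 | rewrite (io_one hio)].
  split; first by split.
  rewrite (qmap_one hfR) mul1q; split => // p hp.
  by rewrite (qmap_one (hfp hp (HQp p hp))) mul1q; exact: hpp p hp.
Qed.
End Main.

Unset Implicit Arguments.
Theorem lemma3p3
  (R : realType) (Qp : nat -> fieldType) (absp : forall p : nat, Qp p -> R)
  (HQp : forall p : nat, prime p -> is_Qp p (absp p))
  (a b : rat) (Hdef : a < 0 /\ b < 0)
  (e : 'I_4 -> quat rat) (HO : is_eichler a b e)
  (Hclass1 : forall x : adele R Qp,
     (x.1 <> qzero R /\ (forall p, prime p -> x.2 p <> qzero (Qp p)) /\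
      exists N : nat, forall p, prime p -> (N < p)%N ->
        inK a b (Zp_int (absp p)) (fun i => qmap ratr (e i)) (x.2 p)) ->
     exists (g : quat rat) (k : adele R Qp),
       g <> qzero rat /\ k.1 <> qzero R /\
       (forall p, prime p -> inK a b (Zp_int (absp p)) (fun i => qmap ratr (e i)) (k.2 p)) /\
       projeq (qmul a b (qmap ratr g) k.1) x.1 /\
       forall p, prime p -> projeq (qmul a b (qmap ratr g) (k.2 p)) (x.2 p))
  (d : int) (Hd : imag_quad_disc d)
  (iota0 : rat * rat -> quat rat) (Hiota0 : opt_emb a b d isZ e iota0) :
  let Gamma := inK a b isZ e in
  let inT := fun t : quat rat => exists x : rat * rat, x != (0, 0) /\ t = iota0 x in
  let inB := fun g : quat rat =>
    g <> qzero rat /\ opt_emb a b d isZ e (gact a b (qinv a b g) iota0) in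
  let inBp := fun (p : nat) (g : quat (Qp p)) =>
    g <> qzero (Qp p) /\
    opt_emb a b d (Zp_int (absp p)) (fun i => qmap ratr (e i))
      (gact a b (qinv a b g) (emb_ext (F:=Qp p) iota0)) in
  let Kp := fun (p : nat) => inK a b (Zp_int (absp p)) (fun i => qmap ratr (e i)) in
  let inBA := fun x : adele R Qp =>
    x.1 <> qzero R /\ (forall p, prime p -> inBp p (x.2 p)) /\
    exists N : nat, forall p, prime p -> (N < p)%N -> Kp p (x.2 p) in
  let inKA := fun k : adele R Qp =>
    k.1 <> qzero R /\ forall p, prime p -> Kp p (k.2 p) in
  (* T \ B / Gamma *)
  let relB := fun g h : quat rat =>
    exists t gam, inT t /\ Gamma gam /\ projeq (qmul a b (qmul a b t g) gam) h in
  (* T \ B_A / K *)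
  let relBA := fun x y : adele R Qp =>
    exists t (k : adele R Qp), inT t /\ inKA k /\
      projeq (qmul a b (qmul a b (qmap ratr t) x.1) k.1) y.1 /\
      forall p, prime p -> projeq (qmul a b (qmul a b (qmap ratr t) (x.2 p)) (k.2 p)) (y.2 p) in
  (* iota1 ~ iota2 *)
  let embeq := fun iota1 iota2 : rat * rat -> quat rat =>
    exists gam, Gamma gam /\ forall x, gact a b gam iota1 x = iota2 x in
  let phi := fun g : quat rat => gact a b (qinv a b g) iota0 in
  (* (1) g |-> g^-1 . iota0 induces T\B/Gamma ~= Emb(o_E,O)/~ *)
  ((forall g h, inB g -> inB h -> (relB g h <-> embeq (phi g) (phi h))) /\
   (forall iota, opt_emb a b d isZ e iota -> exists g, inB g /\ embeq (phi g) iota)) /\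
  (* (2) the diagonal map B -> B_A induces T\B/Gamma ~= T\B_A/K *)
  ((forall g, inB g -> inBA (diag R Qp g)) /\
   (forall g h, inB g -> inB h -> (relB g h <-> relBA (diag R Qp g) (diag R Qp h))) /\
   (forall x, inBA x -> exists g, inB g /\ relBA (diag R Qp g) x)).
Proof.
cbv zeta.
have [ha hb] := Hdef.
have [hbas [O1 [O2 [hO1 [hO2 hOe]]]]] := HO.
have [N [hNM hMN]] := basis_inv hbas.
have [[_ [o1 m1]] _] := hO1.
have [[_ [o2 m2]] _] := hO2.
have hone : lat isZ e (qone rat) by apply/hOe; split.
have hmulO : forall x y, lat isZ e x -> lat isZ e y -> lat isZ e (qmul a b x y).
  move=> x y /hOe [hx1 hx2] /hOe [hy1 hy2]; apply/hOe; split; [exact: m1 | exact: m2].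
split; [split|split; [|split]].
- move=> g h hg hh; exact: (part1a a b ha hb e d iota0 Hiota0 g h hg hh).
- move=> iota hi; exact: (part1b a b ha hb e hone d iota0 Hiota0 iota hi).
- move=> g hg; exact: (part2a R Qp absp HQp a b ha hb e N hNM hMN d iota0 Hiota0 g hg).
- move=> g h hg hh.
  exact: (part2b R Qp absp HQp a b ha hb e N hNM hMN d iota0 Hiota0 g h (proj1 hg) (proj1 hh)).
- move=> x hx.
  exact: (part2c R Qp absp HQp a b ha hb e N hNM hMN hmulO d iota0 Hiota0 Hclass1 x hx).
Qed.
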